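(* Let $G$ be a graph, $X\subseteq T\subseteq V(G)$, $k'$ an integer, and $H=H_T$ the torso of $T$ in $G$. If there exists a connected $(X,T,k')$-witness $(L,R)$, then there exists a connected $(X,T,k')$-witness $(L',R')$ with $(L'\setminus R')\cap T=(L\setminus R)\cap T$ which further satisfies $N_H((L'\setminus R')\cap T)\supseteq L'\cap R'\cap T$.
   Context: A vertex cut of $G$ is an ordered pair $(L,R)$ with $L\cup R=V(G)$, $L\setminus R,R\setminus L\ne\emptyset$ and no edge between $L\setminus R$ and $R\setminus L$. The torso $H_T$ of $T$ in $G$ is the graph with vertex set $T$ and an edge $\{u,v\}$ whenever $\{u,v\}\in E(G)$ or $u,v\in N_G(D)$ for some connected component $D$ of $G\setminus T$. An $(X,T,k')$-witness is a vertex cut $(L,R)$ of $G$ with $|L\cap R|\le k'$, $|L\cap T|>|L\cap R|$, and $X\subseteq R$; it is connected if $H_T[(L\setminus R)\cap T]$ is connected. $N_H(S)$ denotes the set of vertices outside $S$ adjacent in $H$ to some vertex of $S$. *)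

(* Defs.v *)
(* Finite simple graphs: vertex type V : finType,
   adjacency e : rel V, assumed symmetric and irreflexive. *)
From mathcomp Require Import all_boot all_order all_algebra.
Set Implicit Arguments. Unset Strict Implicit. Unset Printing Implicit Defensive.

Section Defs.
Variables (V : finType) (e : rel V).

Definition nbh (r : rel V) (S : {set V}) : {set V} :=
  [set v | (v \notin S) && [exists u in S, r u v]].

Definition vertex_cut (L R : {set V}) : Prop :=
  [/\ L :|: R = setT, L :\: R != set0, R :\: L != set0 &
      forall u v, u \in L :\: R -> v \in R :\: L -> ~~ e u v].

Definition del_rel (T : {set V}) : rel V :=
  [rel x y | [&& x \notin T, y \notin T & e x y]].

Definition component_of (T : {set V}) (D : {set V}) : Prop :=
  exists2 x, x \notin T & D = [set y | connect (del_rel T) x y].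

(* the connected component of G \ T containing x (meaningful for x \notin T) *)
Definition comp (T : {set V}) (x : V) : {set V} := [set y | connect (del_rel T) x y].

(* adjacency of the torso H_T: u,v in T distinct, and either adjacent in G
   or both in N_G(D) for some connected component D of G \ T
   (components of G \ T are exactly the sets comp T x with x \notin T) *)
Definition torso_rel (T : {set V}) : rel V :=
  fun u v => [&& u \in T, v \in T, u != v &
      e u v || [exists x, [&& x \notin T, u \in nbh e (comp T x) & v \in nbh e (comp T x)]]].

Definition induced_connected (r : rel V) (S : {set V}) : Prop :=
  forall x y, x \in S -> y \in S ->
    connect [rel a b | [&& a \in S, b \in S & r a b]] x y.

Definition witness (X T : {set V}) (k : int) (L R : {set V}) : Prop :=
  [/\ vertex_cut L R, (#|L :&: R|%:Z <= k)%R,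
      #|L :&: T| > #|L :&: R| & X \subset R].

Definition connected_witness (X T : {set V}) (k : int) (L R : {set V}) : Prop :=
  witness X T k L R /\ induced_connected (torso_rel T) ((L :\: R) :&: T).

End Defs.

(* Main.v *)
Require Import Defs.
From mathcomp Require Import all_boot all_order all_algebra.
From mathcomp Require Import zify.

Lemma comp_notT (V : finType) (e : rel V) (T : {set V}) (x y : V) :
  x \notin T -> y \in Defs.comp e T x -> y \notin T.
Proof.
move=> xT; rewrite inE => /connectP [p pth ->].
case/lastP: p pth => [//|p z]; rewrite rcons_path last_rcons => /andP[_].
by case/and3P.
Qed.
Arguments comp_notT {V e T x y}.

Ltac bsolve := repeat match goal with |- context[?x \in ?S] => case: (x \in S) end.

Theorem mainTheorem12 (V : finType) (e : rel V)
  (e_sym : symmetric e) (e_irr : irreflexive e)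
  (X T : {set V}) (k : int)
  (hXT : X \subset T)
  (L R : {set V}) (hLR : connected_witness e X T k L R) :
  exists L' R' : {set V},
    [/\ connected_witness e X T k L' R',
        (L' :\: R') :&: T = (L :\: R) :&: T &
        L' :&: R' :&: T \subset nbh (torso_rel e T) ((L' :\: R') :&: T)].
Proof.
case: hLR => [[[hU hLRne hRLne hcut] hk hcard hXR] hconn].
set A := (L :\: R) :&: T.
set Y := A :|: [set x in (L :\: R) :\: T | [exists a in A, a \in nbh e (Defs.comp e T x)]].
have delsym : symmetric (del_rel e T).
  by move=> x y; rewrite /del_rel /= e_sym; case: (x \in T); case: (y \in T).
have compeq x y : x \notin T -> y \notin T -> e x y -> Defs.comp e T x = Defs.comp e T y.
  move=> xT yT exy; apply/setP => z; rewrite !inE; apply/idP/idP => h.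
    apply: connect_trans h; rewrite (sym_connect_sym delsym); apply: connect1.
    by rewrite /del_rel /= xT yT exy.
  apply: connect_trans h; apply: connect1; by rewrite /del_rel /= xT yT exy.
have inLR u : u \in L :\: R -> forall v, e u v -> v \in L.
  move=> hu v huv; apply/negPn/negP => vL.
  have : v \in R :\: L.
    have : v \in L :|: R by rewrite hU inE.
    by rewrite !inE (negbTE vL).
  by move/(hcut u v hu); rewrite huv.
have hYLR : Y \subset L :\: R.
  by apply/subsetP => x; rewrite !inE => /orP[/andP[]|/andP[/andP[_ ->]]].
have hYT : Y :&: T = A.
  apply/setP => x; rewrite !inE; case: (x \in T); rewrite ?andbT ?andbF //=.
  by rewrite orbF.
have caseY u : u \in Y -> (u \in A) \/ (u \notin T /\ exists2 a, a \in A & a \in nbh e (Defs.comp e T u)).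
  rewrite inE => /orP[->|]; first by left.
  rewrite inE => /andP[]; rewrite inE => /andP[uT _] /existsP[a /andP[aA an]]; right; split => //.
  by exists a.
have hN v : v \in nbh e Y -> v \in L :&: R.
  rewrite inE => /andP[vY /existsP[u /andP[uY euv]]].
  have uLR : u \in L :\: R by apply: (subsetP hYLR).
  have vL := inLR u uLR v euv.
  rewrite inE vL /=; apply/negPn/negP => vR.
  have vLR : v \in L :\: R by rewrite inE vR.
  case: (boolP (v \in T)) => vT.
    by move: vY; rewrite inE negb_or => /andP[/negP[]]; rewrite inE vLR vT.
  move: vY; rewrite inE negb_or => /andP[_]; rewrite inE => /negP; apply.
  rewrite (_ : v \in (L :\: R) :\: T) /=; last by rewrite inE vT vLR.
  case: (caseY u uY) => [uA | [uT [a aA an]]].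
    apply/existsP; exists u; rewrite uA /= inE; apply/andP; split.
      apply/negP => /(comp_notT vT); by move: uA; rewrite inE => /andP[_ ->].
    apply/existsP; exists v; rewrite inE connect0 /= e_sym //.
  apply/existsP; exists a; rewrite aA /=.
  by rewrite -(compeq u v uT vT euv).
have hAY : A \subset Y by apply/subsetP => x xA; rewrite inE xA.
have hNY v u : u \in Y -> e u v -> v \notin Y -> v \in nbh e Y.
  by move=> uY euv vY; rewrite inE vY /=; apply/existsP; exists u; rewrite uY.
have hNdef v : v \in nbh e Y -> v \notin Y /\ exists2 u, u \in Y & e u v.
  by rewrite inE => /andP[vY /existsP[u /andP[uY euv]]]; split => //; exists u.
have hAne : A != set0.
  apply: contraTneq hcard => A0; rewrite -leqNgt; apply: subset_leq_card.
  apply/subsetP => x; rewrite !inE => /andP[xL xT]; rewrite xL /=.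
  case: (boolP (x \in R)) => // xR; by move/setP: A0 => /(_ x); rewrite !inE xR xL xT.
have htorso s : s \in nbh e Y -> s \in T -> s \in nbh (torso_rel e T) A.
  move=> /hNdef [sY [u uY eus]] sT.
  rewrite inE; apply/andP; split.
    by apply: contra sY => /(subsetP hAY).
  case: (caseY u uY) => [uA | [uT [a aA an]]].
    apply/existsP; exists u; rewrite uA /= /torso_rel sT eus orTb andbT.
    move: uA; rewrite inE => /andP[_ ->] /=.
    by apply: contraNneq sY => <-.
  apply/existsP; exists a; rewrite aA /= /torso_rel sT.
  move: (aA); rewrite inE => /andP[_ ->] /=.
  apply/andP; split; first by apply: contraNneq sY => <-; apply: (subsetP hAY).
  apply/orP; right; apply/existsP; exists u; rewrite uT an /=.
  rewrite inE; apply/andP; split.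
    by apply/negP => /(comp_notT uT); rewrite sT.
  by apply/existsP; exists u; rewrite inE connect0 eus.
have hRL : (~: Y) :\: (Y :|: nbh e Y) != set0.
  case/set0Pn: hRLne => y; rewrite inE => /andP[yL yR].
  apply/set0Pn; exists y; rewrite in_setD in_setU in_setC.
  have yY : y \notin Y by apply: contra yL => /(subsetP hYLR); rewrite inE => /andP[].
  rewrite (negbTE yY) /= andbT; apply/negP => yN; move: (hN y yN); by rewrite inE (negbTE yL).
set N := nbh e Y in hNY hNdef htorso hRL hN *.
clearbody N.
have hNS : N \subset L :&: R by apply/subsetP.
have c1 := cardsID R (L :&: T).
have c2 := cardsID T (L :&: R).
have c3 := cardsID T N.
have s1 : #|L :&: T :&: R| <= #|L :&: R :&: T|.
  by apply: subset_leq_card; apply/subsetP => x; rewrite !inE; bsolve.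
have s2 : #|(L :&: T) :\: R| <= #|A|.
  by apply: subset_leq_card; apply/subsetP => x; rewrite !inE; bsolve.
have s3 : #|N :\: T| <= #|(L :&: R) :\: T|.
  apply: subset_leq_card; apply/subsetP => x; rewrite !inE => /andP[xT xN].
  by move: (subsetP hNS x xN); rewrite !inE xT => ->.
have s4 : #|A| <= #|(Y :|: N) :&: T :&: Y|.
  apply: subset_leq_card; apply/subsetP => x xA.
  rewrite in_setI in_setI in_setU (subsetP hAY x xA) /=.
  by move: xA; rewrite inE => /andP[_ ->].
have s5 : #|N :&: T| <= #|((Y :|: N) :&: T) :\: Y|.
  apply: subset_leq_card; apply/subsetP => x; rewrite in_setI => /andP[xN xT].
  rewrite in_setD in_setI in_setU xN xT orbT andbT andbT.
  by case: (hNdef x xN).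
have c4 := cardsID Y ((Y :|: N) :&: T).
exists (Y :|: N), (~: Y).
have eI : (Y :|: N) :&: ~: Y = N.
  apply/setP => x; rewrite in_setI in_setU in_setC.
  case xY: (x \in Y) => /=; last by rewrite andbT.
  by case xN: (x \in N) => //; case: (hNdef x xN); rewrite xY.
have eD : (Y :|: N) :\: ~: Y = Y.
  apply/setP => x; rewrite in_setD in_setU in_setC negbK.
  by case xY: (x \in Y).
rewrite eI eD hYT.
split; [ | by [] | by apply/subsetP => x; rewrite in_setI => /andP[]; apply: htorso].
split; last by rewrite eD hYT.
split.
- split.
  + apply/setP => x; rewrite in_setU in_setU in_setC in_setT; by case: (x \in Y); rewrite ?orbT.
  + rewrite eD; apply: contraNneq hAne => Y0; apply/eqP/setP => x; rewrite in_set0.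
    by apply/negbTE/negP => /(subsetP hAY); rewrite Y0 in_set0.
  + by [].
  + move=> u v; rewrite eD in_setD in_setC in_setU => uY /andP[vN vnb].
    apply/negP => euv; move: vN.
    by rewrite (hNY v u uY euv vnb) orbT.
- rewrite eI; have h := subset_leq_card hNS; lia.
- rewrite eI; lia.
- apply/subsetP => x xX; rewrite inE; apply/negP => /(subsetP hYLR).
  by rewrite inE (subsetP hXR x xX).
Qed.
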